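(* Let $A \in \mathbb{R}_+^{m\times n}$ be a matrix with nonnegative entries, let $y \in \mathbb{Z}_+^m$, let $\beta>0$, and define $F(f) = \mathbb{1}^T A f - \sum_{i=1}^m y_i \log(e_i^T A f + \beta)$ for $f \in \mathbb{R}_+^n$, where $\mathbb{1}$ is the all-ones vector in $\mathbb{R}^m$ and $e_i$ is the $i$-th canonical basis vector. Then $F$ is Lipschitz continuously differentiable on $\mathbb{R}_+^n$, with the Lipschitz constant $L$ of $\nabla F$ on $\mathbb{R}_+^n$ satisfying $$L \le \frac{\max(y)}{\beta^2}\,\|A\|_2^2 \le \frac{\max(y)}{\beta^2}\,\max(A^T\mathbb{1})\,\max(A\mathbb{1}),$$ where $\max(v)$ denotes the largest entry of a vector $v$ (and in $A^T\mathbb{1}$ the vector $\mathbb{1}$ is the all-ones vector of $\mathbb{R}^m$, in $A\mathbb{1}$ of $\mathbb{R}^n$).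
   Context: $\|A\|_2$ denotes the spectral norm of $A$. $F$ is the negative Poisson log-likelihood (up to constants) with a small offset $\beta$. *)

(* Defs.v *)
From HB Require Import structures.
From mathcomp Require Import all_boot all_order all_algebra.
From mathcomp Require Import all_classical all_reals all_analysis.
Set Implicit Arguments. Unset Strict Implicit. Unset Printing Implicit Defensive.
Import Order.TTheory GRing.Theory Num.Theory.
Import numFieldNormedType.Exports.
Local Open Scope classical_set_scope.
Local Open Scope ring_scope.

Definition norm2 {R : realType} {n : nat} (v : 'cV[R]_n) : R :=
  Num.sqrt (\sum_(i < n) v i 0 ^+ 2).

Definition specnorm {R : realType} {m n : nat} (A : 'M[R]_(m, n)) : R :=
  sup [set norm2 (A *m x) | x in [set x : 'cV[R]_n | norm2 x <= 1]].

Definition nonneg_vec {R : realType} {n : nat} (f : 'cV[R]_n) : Prop :=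
  forall j, 0 <= f j 0.

Definition poissonF {R : realType} {m n : nat} (A : 'M[R]_(m, n))
  (y : 'I_m -> nat) (beta : R) (f : 'cV[R]_n) : R :=
  \sum_(i < m) (A *m f) i 0 - \sum_(i < m) (y i)%:R * ln ((A *m f) i 0 + beta).

Definition grad {R : realType} {n : nat} (F : 'cV[R]_n -> R) (f : 'cV[R]_n)
  : 'cV[R]_n :=
  \col_(j < n) ('d F f (delta_mx j 0 : 'cV[R]_n)).

Definition grad_lip_on_nonneg {R : realType} {n : nat} (F : 'cV[R]_n -> R) (c : R)
  : Prop :=
  0 <= c /\ forall f g : 'cV[R]_n, nonneg_vec f -> nonneg_vec g ->
    norm2 (grad F f - grad F g) <= c * norm2 (f - g).

Definition grad_lip_const {R : realType} {n : nat} (F : 'cV[R]_n -> R) : R :=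
  inf [set c | grad_lip_on_nonneg F c].

(* max entry of a column vector with nonnegative entries (0 for the empty vector) *)
Definition vmax {R : realType} {k : nat} (v : 'cV[R]_k) : R :=
  \big[Num.max/0]_(i < k) v i 0.

Definition ones {R : realType} (k : nat) : 'cV[R]_k := const_mx 1.

(* Main.v *)
Require Import Defs.
From HB Require Import structures.
From mathcomp Require Import all_boot all_order all_algebra.
From mathcomp Require Import all_classical all_reals all_analysis.
From mathcomp Require Import ring lra.
Import Order.TTheory GRing.Theory Num.Theory.
Import numFieldNormedType.Exports.
Local Open Scope classical_set_scope.
Local Open Scope ring_scope.
Set Implicit Arguments. Unset Strict Implicit.

Section D.
Variables (R : realType) (m n : nat) (A : 'M[R]_(m, n)).

Definition gi (i : 'I_m) (f : 'cV[R]_n) : R := (A *m f) i 0.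

Lemma gi_sum i : gi i = \sum_(j < n) (A i j) *: (fun f : 'cV[R]_n => f j 0).
Proof.
rewrite fct_sumE; apply/funext => f; rewrite /gi mxE.
by apply: eq_bigr => j _.
Qed.

Lemma gi_differentiable i f : differentiable (gi i) f.
Proof.
rewrite gi_sum; apply: differentiable_sum => j.
apply: differentiableZ; exact: differentiable_coord.
Qed.

Lemma gi_linear i : linear (gi i).
Proof. by move=> a u v; rewrite /gi linearP !mxE. Qed.

Lemma diff_gi i f v : 'd (gi i) f v = gi i v.
Proof.
pose gL : {linear 'cV[R]_n -> R} := HB.pack (gi i) (GRing.isLinear.Build _ _ _ _ _ (gi_linear i)).
have -> : gi i = gL by [].
rewrite diff_lin //.
move=> x; apply: differentiable_continuous; exact: gi_differentiable.
Qed.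

Lemma ln_differentiable (x : R) : 0 < x -> differentiable (@ln R) x.
Proof.
move=> x0; apply/derivable1_diffP.
by have := is_derive1_ln x0 => [[]].
Qed.

Variables (y : 'I_m -> nat) (beta : R).
Definition psi i (x : R) : R := x - (y i)%:R * ln (x + beta).
Definition dpsi i (x : R) : R := 1 - (y i)%:R * (x + beta)^-1.

Lemma psi_is_derive i a : 0 < a + beta -> is_derive a 1 (psi i) (dpsi i a).
Proof.
move=> ab.
have h1 : is_derive a 1 (fun x : R => x + beta) 1.
  have h : is_derive a (1:R) (id + cst beta) (1 + 0) by exact: is_deriveD.
  by rewrite addr0 in h.
have h2 : is_derive a 1 (@ln R \o (fun x : R => x + beta)) ((a + beta)^-1 * 1).
  by apply: is_derive1_comp => //; exact: is_derive1_ln.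
rewrite /dpsi mulr1 in h2.
have h3 := @is_deriveZ R R R _ ((y i)%:R) a 1 _ h2.
have h4 := @is_deriveB R R R id _ a 1 1 _ (is_derive_id _ _) h3.
rewrite /psi /dpsi; exact: h4.
Qed.
Lemma psi_differentiable i a : 0 < a + beta -> differentiable (psi i) a.
Proof.
move=> ab; apply/derivable1_diffP.
have [] := @psi_is_derive i a ab; by [].
Qed.

Lemma diff_psi i a w : 0 < a + beta -> 'd (psi i) a w = w * dpsi i a.
Proof.
move=> ab.
have -> : w = w *: (1 : R) by rewrite /GRing.scale /= mulr1.
rewrite linearZ /= -deriveE; last exact: psi_differentiable.
by have hd := @psi_is_derive i a ab; rewrite derive_val /GRing.scale /= mulr1.
Qed.

Lemma poissonFE : poissonF A y beta = fun f => \sum_(i < m) psi i (gi i f).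
Proof.
apply/funext => f; rewrite /poissonF -sumrB; apply: eq_bigr => i _ //.
Qed.

Lemma F_differentiable f : (forall i, 0 < gi i f + beta) ->
  differentiable (poissonF A y beta) f.
Proof.
move=> H; rewrite poissonFE.
have -> : (fun f => \sum_(i < m) psi i (gi i f)) = \sum_(i < m) (psi i \o gi i).
  by rewrite fct_sumE.
apply: differentiable_sum => i.
apply: differentiable_comp; first exact: gi_differentiable.
exact: psi_differentiable.
Qed.

Lemma grad_F f : (forall i, 0 < gi i f + beta) ->
  grad (poissonF A y beta) f = \col_(j < n) \sum_(i < m) A i j * dpsi i (gi i f).
Proof.
move=> H; apply/matrixP => j k; rewrite !mxE.
rewrite -deriveE; last exact: F_differentiable.
rewrite poissonFE.
have -> : (fun f => \sum_(i < m) psi i (gi i f)) = \sum_(i < m) (psi i \o gi i).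
  by rewrite fct_sumE.
rewrite derive_sum; last first.
  move=> i; apply: diff_derivable; apply: differentiable_comp; first exact: gi_differentiable.
  exact: psi_differentiable.
apply: eq_bigr => i _.
rewrite deriveE; last first.
  apply: differentiable_comp; first exact: gi_differentiable.
  exact: psi_differentiable.
rewrite diff_comp; [|exact: gi_differentiable|exact: psi_differentiable].
rewrite /= diff_psi // diff_gi; congr (_ * _).
rewrite /gi mxE (bigD1 j) //= big1 ?addr0.
  by rewrite mxE eqxx /= mulr1.
by move=> l lj; rewrite mxE (negbTE lj) andbT mulr0.
Qed.
End D.
Section N.
Variable R : realType.

Lemma sumsq_ge0 k (u : 'I_k -> R) : 0 <= \sum_i u i ^+ 2.
Proof. by apply: sumr_ge0 => i _; exact: sqr_ge0. Qed.

Lemma norm2_ge0 k (v : 'cV[R]_k) : 0 <= norm2 v.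
Proof. exact: sqrtr_ge0. Qed.

Lemma norm2_sq k (v : 'cV[R]_k) : norm2 v ^+ 2 = \sum_i v i 0 ^+ 2.
Proof. by rewrite /norm2 sqr_sqrtr // sumsq_ge0. Qed.

Lemma CS k (u v : 'I_k -> R) :
  (\sum_i u i * v i) ^+ 2 <= (\sum_i u i ^+ 2) * (\sum_i v i ^+ 2).
Proof.
have E : \sum_i \sum_j (u i * v j - u j * v i) ^+ 2 =
   2 * ((\sum_i u i ^+ 2) * (\sum_i v i ^+ 2) - (\sum_i u i * v i) ^+ 2).
  have e1 : \sum_i \sum_j (u i * v j - u j * v i) ^+ 2 =
     \sum_i \sum_j (u i ^+ 2 * v j ^+ 2) + \sum_i \sum_j (u j ^+ 2 * v i ^+ 2)
     - 2 * \sum_i \sum_j (u i * v i * (u j * v j)).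
    rewrite mulr_sumr -big_split -sumrB /=; apply: eq_bigr => i _.
    rewrite mulr_sumr -big_split -sumrB /=; apply: eq_bigr => j _.
    by ring.
  rewrite e1.
  have e2 : \sum_i \sum_j (u i ^+ 2 * v j ^+ 2) = (\sum_i u i ^+ 2) * (\sum_i v i ^+ 2).
    by rewrite mulr_suml; apply: eq_bigr => i _; rewrite mulr_sumr.
  have e3 : \sum_i \sum_j (u i * v i * (u j * v j)) = (\sum_i u i * v i) ^+ 2.
    by rewrite expr2 mulr_suml; apply: eq_bigr => i _; rewrite mulr_sumr.
  have e4 : \sum_i \sum_j (u j ^+ 2 * v i ^+ 2) = (\sum_i u i ^+ 2) * (\sum_i v i ^+ 2).
    rewrite mulrC mulr_suml; apply: eq_bigr => i _; rewrite mulr_sumr.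
    by apply: eq_bigr => j _; rewrite mulrC.
  rewrite e2 e3 e4; ring.
have : 0 <= \sum_i \sum_j (u i * v j - u j * v i) ^+ 2.
  by apply: sumr_ge0 => i _; apply: sumr_ge0 => j _; exact: sqr_ge0.
rewrite E pmulr_rge0 // subr_ge0 //.
Qed.

Lemma CS_abs k (u v : 'I_k -> R) :
  `|\sum_i u i * v i| <= Num.sqrt (\sum_i u i ^+ 2) * Num.sqrt (\sum_i v i ^+ 2).
Proof.
rewrite -sqrtrM ?sumsq_ge0 // -sqrtr_sqr ler_sqrt //; last first.
  by apply: mulr_ge0; exact: sumsq_ge0.
exact: CS.
Qed.

Lemma norm2_le k (u v : 'cV[R]_k) c : 0 <= c ->
  (forall i, `|u i 0| <= c * `|v i 0|) -> norm2 u <= c * norm2 v.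
Proof.
move=> c0 H; rewrite /norm2 -(ger0_norm c0) -sqrtr_sqr -sqrtrM ?sqr_ge0 //.
rewrite ler_sqrt; last by apply: mulr_ge0; [exact: sqr_ge0|exact: sumsq_ge0].
rewrite mulr_sumr; apply: ler_sum => i _.
rewrite -exprMn -real_normK ?num_real // -[X in _ <= X]real_normK ?num_real //.
rewrite ler_sqr ?nnegrE ?normr_ge0 //.
by rewrite normrM (ger0_norm c0).
Qed.

Lemma norm2Z k (v : 'cV[R]_k) c : norm2 (c *: v) = `|c| * norm2 v.
Proof.
rewrite /norm2 -sqrtr_sqr -sqrtrM ?sqr_ge0 // mulr_sumr; congr Num.sqrt.
by apply: eq_bigr => i _; rewrite mxE exprMn.
Qed.

Lemma norm2_eq0 k (v : 'cV[R]_k) : norm2 v = 0 -> v = 0.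
Proof.
move=> /eqP; rewrite sqrtr_eq0 => h.
have h0 : \sum_i v i 0 ^+ 2 = 0 by apply/eqP; rewrite eq_le h sumsq_ge0.
apply/matrixP => i j; rewrite (ord1 j) mxE.
have := psumr_eq0P (fun i _ => sqr_ge0 (v i 0)) h0 (i := i) isT.
by move/eqP; rewrite sqrf_eq0 => /eqP.
Qed.

Lemma vmax_ge k (v : 'cV[R]_k) i : v i 0 <= vmax v.
Proof. by rewrite /vmax; apply/bigmax_geP; right; exists i. Qed.

Lemma vmax_ge0 k (v : 'cV[R]_k) : 0 <= vmax v.
Proof. by rewrite /vmax; apply/bigmax_geP; left. Qed.

Lemma rowsumE m n (A : 'M[R]_(m, n)) i : (A *m ones n) i 0 = \sum_j A i j.
Proof. by rewrite mxE; apply: eq_bigr => j _; rewrite mxE mulr1. Qed.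

Lemma colsumE m n (A : 'M[R]_(m, n)) j : (A^T *m ones m) j 0 = \sum_i A i j.
Proof. by rewrite mxE; apply: eq_bigr => i _; rewrite !mxE mulr1. Qed.

Lemma wCS k (a x : 'I_k -> R) : (forall j, 0 <= a j) ->
  (\sum_j a j * x j) ^+ 2 <= (\sum_j a j) * (\sum_j a j * x j ^+ 2).
Proof.
move=> a0.
have := CS (fun j => Num.sqrt (a j)) (fun j => Num.sqrt (a j) * x j).
have e1 : \sum_j Num.sqrt (a j) * (Num.sqrt (a j) * x j) = \sum_j a j * x j.
  by apply: eq_bigr => j _; rewrite mulrA -expr2 sqr_sqrtr.
have e2 : \sum_j Num.sqrt (a j) ^+ 2 = \sum_j a j.
  by apply: eq_bigr => j _; rewrite sqr_sqrtr.
have e3 : \sum_j (Num.sqrt (a j) * x j) ^+ 2 = \sum_j a j * x j ^+ 2.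
  by apply: eq_bigr => j _; rewrite exprMn sqr_sqrtr.
by rewrite e1 e2 e3.
Qed.

Lemma schur m n (A : 'M[R]_(m, n)) (x : 'cV[R]_n) : (forall i j, 0 <= A i j) ->
  norm2 (A *m x) ^+ 2 <= vmax (A^T *m ones m) * vmax (A *m ones n) * norm2 x ^+ 2.
Proof.
move=> A0; set c := vmax _; set r := vmax _.
rewrite !norm2_sq.
apply: (@le_trans _ _ (\sum_i r * \sum_j A i j * x j 0 ^+ 2)).
  apply: ler_sum => i _; rewrite mxE.
  apply: (le_trans (wCS (fun j => x j 0) (A0 i))).
  apply: ler_wpM2r; first by apply: sumr_ge0 => j _; apply: mulr_ge0 => //; exact: sqr_ge0.
  by rewrite -rowsumE; exact: vmax_ge.
rewrite -mulr_sumr exchange_big /= [c * r]mulrC -mulrA.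
apply: ler_wpM2l; first exact: vmax_ge0.
rewrite mulr_sumr; apply: ler_sum => j _.
rewrite -mulr_suml; apply: ler_wpM2r; first exact: sqr_ge0.
by rewrite -colsumE; exact: vmax_ge.
Qed.

Lemma norm2_0 k : norm2 (0 : 'cV[R]_k) = 0.
Proof.
rewrite /norm2 big1 ?sqrtr0 // => i _; by rewrite mxE expr0n.
Qed.

Section Spec.
Variables (m n : nat) (A : 'M[R]_(m, n)).
Hypothesis A0 : forall i j, 0 <= A i j.
Let K := vmax (A^T *m ones m) * vmax (A *m ones n).

Lemma K_ge0 : 0 <= K.
Proof. by apply: mulr_ge0; exact: vmax_ge0. Qed.

Lemma spec_ub : ubound [set norm2 (A *m x) | x in [set x : 'cV[R]_n | norm2 x <= 1]]
   (Num.sqrt K).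
Proof.
move=> z [x /= hx <-].
rewrite -[norm2 _]ger0_norm ?norm2_ge0 // -sqrtr_sqr ler_sqrt; last exact: K_ge0.
apply: (le_trans (schur x A0)); rewrite -/K -[X in _ <= X]mulr1.
apply: ler_wpM2l; first exact: K_ge0.
rewrite expr2; rewrite -[1]mulr1; apply: ler_pM => //; exact: norm2_ge0.
Qed.

Lemma spec_ne : [set norm2 (A *m x) | x in [set x : 'cV[R]_n | norm2 x <= 1]] (norm2 (A *m 0)).
Proof. by exists 0 => //=; rewrite norm2_0. Qed.

Lemma specnorm_ge0 : 0 <= specnorm A.
Proof.
have := ub_le_sup (ex_intro _ _ spec_ub) spec_ne.
by rewrite mulmx0 norm2_0.
Qed.

Lemma specnorm_le : specnorm A <= Num.sqrt K.
Proof. by apply: ge_sup; [exists (norm2 (A *m 0)); exact: spec_ne|exact: spec_ub]. Qed.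

Lemma specnorm_bound x : norm2 (A *m x) <= specnorm A * norm2 x.
Proof.
have [/norm2_eq0 ->|xn] := eqVneq (norm2 x) 0.
  by rewrite mulmx0 !norm2_0 mulr0.
have xp : 0 < norm2 x by rewrite lt0r xn norm2_ge0.
have hS : [set norm2 (A *m x) | x in [set x : 'cV[R]_n | norm2 x <= 1]]
           (norm2 (A *m ((norm2 x)^-1 *: x))).
  exists ((norm2 x)^-1 *: x) => //=.
  by rewrite norm2Z ger0_norm ?invr_ge0 ?norm2_ge0 // mulVf.
have := ub_le_sup (ex_intro _ _ spec_ub) hS.
rewrite -scalemxAr norm2Z ger0_norm ?invr_ge0 ?norm2_ge0 //.
by rewrite ler_pdivrMl // mulrC.
Qed.

Lemma specnorm_tr (d : 'cV[R]_m) : norm2 (A^T *m d) <= specnorm A * norm2 d.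
Proof.
set w := A^T *m d.
have e : norm2 w ^+ 2 = \sum_i d i 0 * (A *m w) i 0.
  rewrite norm2_sq.
  have -> : \sum_j w j 0 ^+ 2 = \sum_j w j 0 * \sum_i A i j * d i 0.
    apply: eq_bigr => j _; rewrite expr2; congr (_ * _).
    by rewrite /w mxE; apply: eq_bigr => i _; rewrite mxE.
  under eq_bigr do rewrite mulr_sumr.
  rewrite exchange_big /=; apply: eq_bigr => i _.
  rewrite mxE mulr_sumr; apply: eq_bigr => j _.
  ring.
have h : norm2 w ^+ 2 <= norm2 d * (specnorm A * norm2 w).
  rewrite e; apply: (le_trans (ler_norm _)).
  apply: (le_trans (CS_abs _ _)).
  apply: ler_wpM2l; first exact: norm2_ge0.
  exact: specnorm_bound.
have [wz|wn] := eqVneq (norm2 w) 0.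
  by rewrite wz; apply: mulr_ge0; [exact: specnorm_ge0|exact: norm2_ge0].
have wp : 0 < norm2 w by rewrite lt0r wn norm2_ge0.
rewrite -(ler_pM2r wp) -expr2; apply: (le_trans h); rewrite le_eqVlt; apply/orP; left; apply/eqP; ring.
Qed.

End Spec.
End N.

Lemma key_ineq (R : realType) (a b yy M beta : R) : 0 <= a -> 0 <= b -> 0 < beta ->
  0 <= yy -> yy <= M ->
  `|(1 - yy * (a + beta)^-1) - (1 - yy * (b + beta)^-1)| <= M / beta ^+ 2 * `|a - b|.
Proof.
move=> a0 b0 bp y0 yM.
have ap : 0 < a + beta by lra.
have bp' : 0 < b + beta by lra.
have e : (1 - yy * (a + beta)^-1) - (1 - yy * (b + beta)^-1)
         = yy * (a + beta)^-1 * (b + beta)^-1 * (a - b).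
  by field; apply/andP; split; apply/lt0r_neq0.
rewrite e normrM; apply: ler_wpM2r; first exact: normr_ge0.
rewrite !normrM ger0_norm // !gtr0_norm ?invr_gt0 //.
rewrite expr2 invfM mulrA; apply: ler_pM.
- by apply: mulr_ge0 => //; rewrite invr_ge0 ltW.
- by rewrite invr_ge0 ltW.
- apply: ler_pM => //; first by rewrite invr_ge0 ltW.
  by rewrite lef_pV2 ?posrE //; lra.
- by rewrite lef_pV2 ?posrE //; lra.
Qed.

Theorem lemma1 (R : realType) (m n : nat) (A : 'M[R]_(m, n))
  (y : 'I_m -> nat) (beta : R) :
  (forall i j, 0 <= A i j) -> 0 < beta ->
  let F := poissonF A y beta in
  let L := grad_lip_const F in
  (forall f : 'cV[R]_n, nonneg_vec f -> differentiable F f) /\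
  (exists c, grad_lip_on_nonneg F c) /\
  L <= ((\max_(i < m) y i)%N%:R / beta ^+ 2) * specnorm A ^+ 2 /\
  ((\max_(i < m) y i)%N%:R / beta ^+ 2) * specnorm A ^+ 2
    <= ((\max_(i < m) y i)%N%:R / beta ^+ 2)
       * vmax (A^T *m ones m) * vmax (A *m ones n).
Proof.
move=> A0 bp F L.
have gi0 : forall f, nonneg_vec f -> forall i, 0 <= gi A i f.
  move=> f hf i; rewrite /gi mxE; apply: sumr_ge0 => j _; exact: mulr_ge0.
have gpos : forall f, nonneg_vec f -> forall i, 0 < gi A i f + beta.
  by move=> f hf i; have := gi0 f hf i; lra.
set M := (\max_(i < m) y i)%N%:R.
have M0 : 0 <= M / beta ^+ 2 by apply: divr_ge0; [exact: ler0n|exact: sqr_ge0].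
set s := specnorm A.
have s0 : 0 <= s := specnorm_ge0 A0.
have lip : grad_lip_on_nonneg F (M / beta ^+ 2 * s ^+ 2).
  split; first by apply: mulr_ge0 => //; exact: sqr_ge0.
  move=> f g hf hg.
  rewrite /F !grad_F //; try exact: gpos.
  set d := \col_(i < m) (dpsi y beta i (gi A i f) - dpsi y beta i (gi A i g)).
  have -> : (\col_j \sum_i A i j * dpsi y beta i (gi A i f)) -
            (\col_j \sum_i A i j * dpsi y beta i (gi A i g)) = A^T *m d.
    apply/matrixP => j k; rewrite !mxE -sumrB; apply: eq_bigr => i _.
    by rewrite /d !mxE; ring.
  apply: (le_trans (specnorm_tr A0 d)); rewrite -/s.
  have hd : norm2 d <= M / beta ^+ 2 * norm2 (A *m (f - g)).
    apply: norm2_le => // i.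
    have -> : (A *m (f - g)) i 0 = gi A i f - gi A i g by rewrite /gi mulmxBr !mxE.
    rewrite mxE /dpsi; apply: key_ineq => //; try exact: gi0.
    by rewrite ler_nat; apply: (@leq_bigmax _ (fun i => y i)).
  apply: (le_trans (ler_wpM2l s0 hd)).
  have hb := specnorm_bound A0 (f - g); rewrite -/s in hb.
  apply: (le_trans (ler_wpM2l s0 (ler_wpM2l M0 hb))).
  rewrite le_eqVlt; apply/orP; left; apply/eqP; ring.
split; first by move=> f hf; apply: F_differentiable; exact: gpos.
split; first by exists (M / beta ^+ 2 * s ^+ 2).
split.
  apply: ge_inf => //; exists 0 => c [] //.
rewrite -[X in _ <= X]mulrA; apply: ler_wpM2l => //.
rewrite -(sqr_sqrtr (K_ge0 A)); rewrite ler_sqr ?nnegrE ?sqrtr_ge0 //.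
exact: specnorm_le.
Qed.
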